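(* For every integer $n\ge4$, $\gamma_{(1,1,0)}^s(P_n)=2\lceil n/3\rceil$.
   Context: $P_n$ is the path on $n$ vertices; $N(v)$ is the open neighbourhood. For a graph $G$, a function $f:V(G)\to\{0,1,2\}$ is a $(1,1,0)$-dominating function if $\sum_{u\in N(v)}f(u)\ge1$ for every vertex $v$ with $f(v)\in\{0,1\}$. For adjacent $v,u$ with $f(v)=0$, $f(u)>0$, $f_{u\to v}$ is defined by $f_{u\to v}(v)=1$, $f_{u\to v}(u)=f(u)-1$, $f_{u\to v}(x)=f(x)$ otherwise. $f$ is a secure $(1,1,0)$-dominating function if it is $(1,1,0)$-dominating and for every $v$ with $f(v)=0$ there is $u\in N(v)$ with $f(u)>0$ such that $f_{u\to v}$ is $(1,1,0)$-dominating. $\gamma_{(1,1,0)}^s(G)$ is the minimum of $\sum_v f(v)$ over secure $(1,1,0)$-dominating functions. *)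

(* Defs.v *)
From mathcomp Require Import all_boot.
Set Implicit Arguments. Unset Strict Implicit. Unset Printing Implicit Defensive.

(* A graph is a relation [adj : rel T] on a finite type T (assumed symmetric,
   irreflexive for simple graphs).  N(v) = [set u | adj v u]. *)

(* Functions f : V -> {0,1,2} are represented as V -> nat; the condition
   that values lie in {0,1,2} is part of the definitions below. *)

Section Dom.
Variables (T : finType) (adj : rel T).

Definition nbsum (f : T -> nat) (v : T) : nat := \sum_(u | adj v u) f u.

Definition is_012 (f : T -> nat) : bool := [forall v, f v <= 2].

Definition dom110 (f : T -> nat) : bool :=
  is_012 f && [forall v, (f v <= 1) ==> (1 <= nbsum f v)].

Definition fmove (f : T -> nat) (u v : T) : T -> nat :=
  fun x => if x == v then 1 else if x == u then (f u).-1 else f x.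

Definition secure_dom110 (f : T -> nat) : bool :=
  dom110 f &&
  [forall v, (f v == 0) ==>
     [exists u, [&& adj v u, 0 < f u & dom110 (fmove f u v)]]].

Definition weight (f : T -> nat) : nat := \sum_v f v.

Definition is_gamma_s110 (k : nat) : Prop :=
  (exists f : T -> nat, secure_dom110 f /\ weight f = k) /\
  (forall f : T -> nat, secure_dom110 f -> k <= weight f).
End Dom.

Definition path_adj (n : nat) : rel 'I_n :=
  fun i j => (i.+1 == j :> nat) || (j.+1 == i :> nat).

(* Main.v *)
Require Import Defs.
From mathcomp Require Import all_boot zify.
Set Implicit Arguments. Unset Strict Implicit. Unset Printing Implicit Defensive.

Lemma le_nbsum (T : finType) (adj : rel T) f v u :
  adj v u -> f u <= nbsum adj f v.
Proof. move=> H; rewrite /nbsum (bigD1 u) //=; exact: leq_addr. Qed.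

Lemma nbsum_fmove (T : finType) (adj : rel T) f u v :
  adj v u -> ~~ adj v v ->
  nbsum adj (fmove f u v) v + f u = nbsum adj f v + (f u).-1.
Proof.
move=> Hvu Hvv; rewrite /nbsum (bigD1 u) //= [X in _ = X + _](bigD1 u) //=.
have Huv : (u == v) = false.
  by apply/negbTE/eqP => E; move: Hvu Hvv; rewrite E => ->.
rewrite /fmove Huv eqxx.
rewrite (eq_bigr f); first lia.
move=> w /andP [Hw Hwu]; rewrite (negbTE Hwu).
case: eqP => // E; move: Hw Hvv; rewrite E => -> //.
Qed.

Lemma closed2 (T : finType) (adj : rel T) f :
  (forall x, ~~ adj x x) -> secure_dom110 adj f ->
  forall v, 2 <= f v + nbsum adj f v.
Proof.
move=> irr /andP [Hd Hs] v.
move: Hd => /andP [_ /forallP Hd].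
case E: (f v) => [|[|m]]; last by lia.
- move/forallP: Hs => /(_ v); rewrite E eqxx /= => /existsP [u /and3P [Hvu Hu Hm]].
  move: Hm => /andP [_ /forallP /(_ v)].
  rewrite {1}/fmove eqxx /= => H.
  have := nbsum_fmove f Hvu (irr v). lia.
- have := Hd v; rewrite E /=; lia.
Qed.

Lemma secure_of (T : finType) (adj : rel T) f :
  (forall x, ~~ adj x x) -> symmetric adj -> is_012 f ->
  (forall v, f v <= 1 -> f v = 0 /\ exists u, adj v u && (f u == 2)) ->
  secure_dom110 adj f.
Proof.
move=> irr sym H012 H.
have Hv := H012; move/forallP: Hv => Hv.
apply/andP; split.
  apply/andP; split => //; apply/forallP => v; apply/implyP => Hv1.
  have [_ [u /andP [Hu /eqP Hf]]] := H v Hv1.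
  have := le_nbsum f Hu; lia.
apply/forallP => v; apply/implyP => /eqP Hv0.
have Hv1 : f v <= 1 by rewrite Hv0.
have [_ [u /andP [Hu /eqP Hf]]] := H v Hv1.
have Huv : (u == v) = false.
  by apply/negbTE/eqP => E; move: Hu (irr v); rewrite E => ->.
apply/existsP; exists u; rewrite Hu Hf /=.
apply/andP; split.
  apply/forallP => x; rewrite /fmove; case: eqP => _ //; case: eqP => _; first by rewrite Hf.
  exact: Hv.
apply/forallP => w; apply/implyP => Hw.
case: (w =P v) => [->|Hwv].
  have := le_nbsum (fmove f u v) Hu; rewrite /fmove Huv eqxx Hf; lia.
case: (w =P u) => [->|Hwu].
  have Huv' : adj u v by rewrite sym.
  have := @le_nbsum _ _ (fmove f u v) u v Huv'; rewrite /fmove eqxx; lia.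
move: Hw; rewrite {1}/fmove; move/eqP/negbTE: Hwv => ->; move/eqP/negbTE: Hwu => -> Hw.
have [_ [x /andP [Hx /eqP Hfx]]] := H w Hw.
have := le_nbsum (fmove f u v) Hx; rewrite /fmove.
case: eqP => _; first lia. case: eqP => _; rewrite ?Hf ?Hfx; lia.
Qed.

Definition ext n (f : 'I_n -> nat) (i : nat) : nat :=
  if insub i is Some u then f u else 0.

Lemma extE n (f : 'I_n -> nat) (u : 'I_n) : ext f u = f u.
Proof. by rewrite /ext valK. Qed.

Lemma ext_out n (f : 'I_n -> nat) i : n <= i -> ext f i = 0.
Proof. rewrite /ext; case: insubP => // u _ <- H; have := ltn_ord u; move: H; rewrite leqNgt => /negP; done. Qed.

Lemma sum_at n (f : 'I_n -> nat) k : \sum_(u : 'I_n | val u == k) f u = ext f k.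
Proof.
rewrite /ext; case: insubP => [u _ <-|Hk].
  by rewrite (big_pred1 u) // => x /=; rewrite val_eqE.
rewrite big_pred0 // => x; apply/eqP => Hx; move: Hk; rewrite -Hx ltn_ord.
done.
Qed.

Lemma nbsum_path n (f : 'I_n -> nat) (v : 'I_n) :
  nbsum (@path_adj n) f v = (if 0 < v then ext f v.-1 else 0) + ext f v.+1.
Proof.
rewrite /nbsum /path_adj.
transitivity (\sum_(u : 'I_n | val u == v.+1) f u +
              \sum_(u : 'I_n | (val u == v.-1) && (0 < v)) f u).
  rewrite [LHS]big_mkcond [X in X + _]big_mkcond [X in _ + X]big_mkcond -big_split /=.
  apply: eq_bigr => u _.
  case: (v.+1 =P val u) => E1; case: (val u =P v.+1) => E2; 
  case: ((val u).+1 =P v) => E3; case: (val u =P v.-1) => E4; 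
  case: (ltnP 0 v) => E5 /=; lia.
rewrite addnC sum_at; congr (_ + _).
case: (ltnP 0 v) => H.
  by rewrite -sum_at; apply: eq_bigl => u; rewrite andb_idr.
by rewrite big_pred0 // => u; rewrite andbF.
Qed.

Lemma path_irr n (x : 'I_n) : ~~ path_adj x x.
Proof. rewrite /path_adj; apply/negP => /orP [] /eqP; lia. Qed.

Lemma path_sym n : symmetric (@path_adj n).
Proof. by move=> x y; rewrite /path_adj orbC. Qed.

Lemma blocks (g : nat -> nat) n :
  (forall i, 0 < i -> i.+1 < n -> 2 <= g i.-1 + g i + g i.+1) ->
  forall k a, a + 3 * k <= n -> 2 * k <= \sum_(a <= i < a + 3 * k) g i.
Proof.
move=> H; elim=> [|k IH] a Ha; first by [].
rewrite (big_cat_nat (n := a + 3)) /=; [|lia|lia].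
have -> : a + 3 * k.+1 = (a + 3) + 3 * k by lia.
have := IH (a + 3); rewrite -(addnA a 3 (3 * k)).
move=> /(_ ltac:(lia)) IH'.
rewrite big_ltn; last lia. rewrite big_ltn; last lia. rewrite big_ltn; last lia.
rewrite big_geq; last lia.
have := H a.+1 ltac:(lia) ltac:(lia). simpl. 
have -> : a.+2 = a + 2 by lia. 

lia.
Qed.

Definition F0 n (i : nat) : nat :=
  if (i %% 3 == 1) || ((i.+1 == n) && (n %% 3 == 1)) then 2 else 0.

Lemma cnt m : \sum_(0 <= i < m) (if i %% 3 == 1 then 2 else 0) = 2 * ((m + 1) %/ 3).
Proof.
elim: m => [|m IH]; first by rewrite big_geq.
rewrite big_nat_recr //= IH; case: ifP => /eqP H; lia.
Qed.

Lemma lower n (f : 'I_n -> nat) : 4 <= n -> secure_dom110 (@path_adj n) f ->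
  2 * ((n + 2) %/ 3) <= weight f.
Proof.
move=> Hn Hf.
set g := ext f.
have Hc : forall i, i < n -> 2 <= (if 0 < i then g i.-1 else 0) + g i + g i.+1.
  move=> i Hi; have := closed2 (@path_irr n) Hf (Ordinal Hi).
  rewrite nbsum_path -(extE f) /= /g; lia.
have Hw : weight f = \sum_(0 <= i < n) g i.
  by rewrite big_mkord /weight; apply: eq_bigr => i _; rewrite /g extE.
have Hout : g n = 0 by apply: ext_out.
have B : forall k a, a + 3*k <= n -> 2*k <= \sum_(a <= i < a + 3*k) g i.
  by apply: blocks => i h1 h2; have := Hc i (ltnW h2); rewrite h1.
have E0 : 2 <= g 0 + g 1 by have := Hc 0 ltac:(lia).
have E1 : 2 <= g (n - 2) + g (n - 2).+1.
  have := Hc (n - 2).+1 ltac:(lia); rewrite /= (_ : (n - 2).+2 = n) ?Hout; lia.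
have S2 : \sum_(0 <= i < 2) g i = g 0 + g 1.
  by rewrite big_ltn // big_ltn // big_geq // addn0.
rewrite Hw.
have : n %% 3 < 3 by apply: ltn_pmod.
case E : (n %% 3) => [|[|[|r]]] // _.
- have := B (n %/ 3) 0 ltac:(lia); rewrite add0n (_ : 3 * (n %/ 3) = n); lia.
- rewrite (big_cat_nat (n := 2)) //=; last lia. rewrite S2.
  rewrite (big_cat_nat (n := n - 2)) //=; [|lia|lia].
  rewrite [X in _ + (_ + X)]big_ltn; last lia. rewrite [X in _ + (_ + (_ + X))]big_ltn; last lia.
  rewrite [X in _ + (_ + (_ + (_ + X)))]big_geq; last lia.
  have := B (n %/ 3 - 1) 2 ltac:(lia); rewrite (_ : 2 + 3 * (n %/ 3 - 1) = n - 2); lia.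
- rewrite (big_cat_nat (n := 2)) //=; last lia. rewrite S2.
  have := B (n %/ 3) 2 ltac:(lia); rewrite (_ : 2 + 3 * (n %/ 3) = n); lia.
Qed.


Lemma upper n : 4 <= n ->
  secure_dom110 (@path_adj n) (fun i : 'I_n => F0 n i) /\
  weight (fun i : 'I_n => F0 n i) = 2 * ((n + 2) %/ 3).
Proof.
move=> Hn; split.
  apply: secure_of; [exact: path_irr| exact: path_sym| |].
    by apply/forallP => x; rewrite /F0; case: ifP.
  move=> v; rewrite /F0; case: ifP => // /negbT; rewrite negb_or negb_and => /andP [H1 H2] _.
  split => //.
  have : v %% 3 < 3 by apply: ltn_pmod.
  case E : (v %% 3) => [|[|[|r]]] // _.
  - have Hv : v.+1 < n.
      move: H2 (ltn_ord v); lia.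
    exists (Ordinal Hv); rewrite /path_adj /= eqxx /=.
    by rewrite (_ : v.+1 %% 3 == 1 = true) //; apply/eqP; lia.
  - by move: H1; rewrite E.
  - have Hv : v.-1 < n by have := ltn_ord v; lia.
    exists (Ordinal Hv); rewrite /path_adj /=.
    rewrite (_ : (v.-1).+1 == v = true); last by apply/eqP; lia.
    by rewrite orbT (_ : v.-1 %% 3 == 1 = true) //; apply/eqP; lia.
have -> : weight (fun i : 'I_n => F0 n i) = \sum_(0 <= i < n) F0 n i by rewrite big_mkord.
case: n Hn => [|m] // Hm.
rewrite big_nat_recr //=.
rewrite (eq_big_nat _ _ (F2 := fun i => if i %% 3 == 1 then 2 else 0)); last first.
  move=> i /andP [_ Hi]; rewrite /F0 (_ : i.+1 == m.+1 = false) ?andFb ?orbF //.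
  apply/negbTE/eqP; lia.
rewrite cnt /F0 eqxx /=.
case: ifP => H; move: H; lia.
Qed.

Theorem proposition23 (n : nat) :
  4 <= n -> is_gamma_s110 (@path_adj n) (2 * ((n + 2) %/ 3)).
Proof.
move=> Hn; split.
  have [H1 H2] := upper Hn; by exists (fun i : 'I_n => F0 n i).
by move=> f Hf; apply: lower.
Qed.
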